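(* Let $P=(O,D,T)$ be an ODT triple and let $\theta$ be a number (in the paper's use, the $k$-th largest value of $\mathrm{cnt}$ among the level-$\ell$ triples generated so far). If $$P.\mathrm{cnt}+\max\{|P.D|\cdot|P.T|,\ |P.O|\cdot|P.T|,\ |P.O|\cdot|P.D|\}\le\theta,$$ then every minimal generalization $\mathrm{CandP}$ of $P$ satisfies $\mathrm{CandP}.\mathrm{cnt}\le\theta$; hence no minimal generalization of $P$ can enter the set of top-$k$ level-$\ell$ ODT triples (ranked by $\mathrm{cnt}$).
   Context: Let $V$ be a finite set of atomic regions, with an undirected neighborhood graph $G=(V,E)$, and let $S=\{1,\dots,M\}$ be the linearly ordered set of atomic timeslots. A region is a nonempty subset $R\subseteq V$ whose induced subgraph in $G$ is connected; a timeslot is a nonempty set of consecutive atomic timeslots. An ODT triple is $P=(O,D,T)$ with $O,D$ regions, $O\cap D=\emptyset$, and $T$ a timeslot; we write $P.O=O$, $P.D=D$, $P.T=T$. Its level is $|O|+|D|+|T|$. A fixed set $\mathcal{A}$ of atomic triples $(o,d,t)\in V\times V\times S$ with $o\ne d$ is given (the atomic patterns). For an ODT triple $P$, $P.\mathrm{cnt}$ denotes the number of atomic triples $(o,d,t)\in O\times D\times T$ that belong to $\mathcal{A}$. A region $R_1$ is a minimal generalization of a region $R_2$ if $R_2\subset R_1$ and $R_1\setminus R_2$ consists of a single atomic region; a timeslot $T_1$ is a minimal generalization of $T_2$ if $T_2\subset T_1$ and $T_1\setminus T_2$ is a single atomic timeslot. An ODT triple $P_1$ is a minimal generalization of $P_2$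 if two of its three components equal those of $P_2$ and the remaining component of $P_1$ is a minimal generalization of the corresponding component of $P_2$. *)

(* Defs.v *)
From mathcomp Require Import all_boot.
Set Implicit Arguments. Unset Strict Implicit. Unset Printing Implicit Defensive.

Section ODT.
Variables (V : finType) (e : rel V) (M : nat).

Definition induced_rel (R : {set V}) : rel V :=
  [rel x y | [&& e x y, x \in R & y \in R]].

Definition is_region (R : {set V}) : Prop :=
  R != set0 /\ forall x y, x \in R -> y \in R -> connect (induced_rel R) x y.

Definition is_timeslot (T : {set 'I_M}) : Prop :=
  T != set0 /\ forall i j k : 'I_M, i \in T -> k \in T -> i <= j -> j <= k -> j \in T.

Record odt := ODT { odtO : {set V}; odtD : {set V}; odtT : {set 'I_M} }.

Definition is_odt (P : odt) : Prop :=
  [/\ is_region (odtO P), is_region (odtD P),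
      [disjoint odtO P & odtD P] & is_timeslot (odtT P)].

Definition cnt (A : {set V * V * 'I_M}) (P : odt) : nat :=
  #|[set x in A | [&& x.1.1 \in odtO P, x.1.2 \in odtD P & x.2 \in odtT P]]|.

Definition region_min_gen (R1 R2 : {set V}) : Prop :=
  is_region R1 /\ R2 \proper R1 /\ #|R1 :\: R2| = 1.

Definition timeslot_min_gen (T1 T2 : {set 'I_M}) : Prop :=
  is_timeslot T1 /\ T2 \proper T1 /\ #|T1 :\: T2| = 1.

Definition odt_min_gen (P1 P2 : odt) : Prop :=
  is_odt P1 /\
  [\/ [/\ region_min_gen (odtO P1) (odtO P2), odtD P1 = odtD P2 & odtT P1 = odtT P2],
      [/\ odtO P1 = odtO P2, region_min_gen (odtD P1) (odtD P2) & odtT P1 = odtT P2]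
    | [/\ odtO P1 = odtO P2, odtD P1 = odtD P2 & timeslot_min_gen (odtT P1) (odtT P2)]].

End ODT.

(* Main.v *)
Require Import Defs.
From mathcomp Require Import all_boot.
From mathcomp Require Import zify.

Lemma card_subU (T : finType) (S1 S Y : {set T}) :
  S1 \subset S :|: Y -> #|S1| <= #|S| + #|Y|.
Proof.
move=> h; apply: leq_trans (subset_leq_card h) _.
by rewrite cardsU leq_subr.
Qed.

Lemma key (V : finType) (M : nat) (A : {set V * V * 'I_M})
  (O1 O D1 D : {set V}) (T1 T : {set 'I_M}) :
  (forall x, x \in A -> x.1.1 \in O1 -> x.1.2 \in D1 -> x.2 \in T1 ->
     (x.1.1 \in O) && (x.1.2 \in D) && (x.2 \in T) \/
     x \in setX (setX (O1 :\: O) D1) T1 \/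
     x \in setX (setX O1 (D1 :\: D)) T1 \/
     x \in setX (setX O1 D1) (T1 :\: T)) ->
  cnt A (ODT O1 D1 T1) <= cnt A (ODT O D T)
     + (#|O1 :\: O| * #|D1| * #|T1| + (#|O1| * #|D1 :\: D| * #|T1|
        + #|O1| * #|D1| * #|T1 :\: T|)).
Proof.
move=> h; rewrite /cnt /=.
set Y1 := setX (setX (O1 :\: O) D1) T1.
set Y2 := setX (setX O1 (D1 :\: D)) T1.
set Y3 := setX (setX O1 D1) (T1 :\: T).
have -> : #|O1 :\: O| * #|D1| * #|T1| = #|Y1| by rewrite !cardsX.
have -> : #|O1| * #|D1 :\: D| * #|T1| = #|Y2| by rewrite !cardsX.
have -> : #|O1| * #|D1| * #|T1 :\: T| = #|Y3| by rewrite !cardsX.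
apply: (leq_trans (@card_subU _ _ [set x in A | [&& x.1.1 \in O, x.1.2 \in D & x.2 \in T]] (Y1 :|: (Y2 :|: Y3)) _)).
  apply/subsetP => x; rewrite inE => /andP [xA /and3P [a b c]].
  case: (h x xA a b c) => [h1 | [h1 | [h1 | h1]]].
  - by rewrite !inE xA; move: h1 => /andP [/andP [-> ->] ->].
  - by rewrite !in_setU h1 !orbT.
  - by rewrite !in_setU h1 !orbT.
  - by rewrite !in_setU h1 !orbT.
rewrite leq_add2l.
apply: leq_trans (@card_subU _ _ Y1 (Y2 :|: Y3) (subxx _)) _.
by rewrite leq_add2l; apply: card_subU.
Qed.

Theorem lemma2 (V : finType) (e : rel V) (M : nat)
  (e_sym : symmetric e) (e_irr : irreflexive e)
  (A : {set V * V * 'I_M})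
  (hA : forall x, x \in A -> x.1.1 != x.1.2)
  (P : odt V M) (hP : is_odt e P) (theta : nat)
  (hth : cnt A P + maxn (#|odtD P| * #|odtT P|)
                        (maxn (#|odtO P| * #|odtT P|) (#|odtO P| * #|odtD P|)) <= theta) :
  forall CandP : odt V M, odt_min_gen e CandP P -> cnt A CandP <= theta.
Proof.
case: P hP hth => O D T _ /= hth; case=> O1 D1 T1 [_ H].
case: H => [[[_ [pr c1]] /= -> ->] | [/= -> [_ [pr c1]] ->] | [/= -> -> [_ [pr c1]]]].
- apply: leq_trans (@key _ _ A O1 O D D T T _) _.
    move=> x xA a b c; case aO: (x.1.1 \in O); first by left; rewrite ?a ?b ?c ?aO ?bD ?cT.
    by right; left; rewrite !inE ?a ?b ?c ?aO ?bD ?cT.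
  move: c1 => /= c1; rewrite !setDv !cards0 ?muln0 ?mul0n c1 ?addn0 ?mul1n.
  apply: leq_trans hth; rewrite leq_add2l; lia.
- apply: leq_trans (@key _ _ A O O D1 D T T _) _.
    move=> x xA a b c; case bD: (x.1.2 \in D); first by left; rewrite ?a ?b ?c ?aO ?bD ?cT.
    by right; right; left; rewrite !inE ?a ?b ?c ?aO ?bD ?cT.
  move: c1 => /= c1; rewrite !setDv !cards0 ?muln0 ?mul0n c1 ?addn0 ?add0n ?muln1.
  apply: leq_trans hth; rewrite leq_add2l; lia.
- apply: leq_trans (@key _ _ A O O D D T1 T _) _.
    move=> x xA a b c; case cT: (x.2 \in T); first by left; rewrite ?a ?b ?c ?aO ?bD ?cT.
    by right; right; right; rewrite !inE ?a ?b ?c ?aO ?bD ?cT.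
  move: c1 => /= c1; rewrite !setDv !cards0 ?muln0 ?mul0n c1 ?addn0 ?add0n ?muln1.
  apply: leq_trans hth; rewrite leq_add2l; lia.
Qed.
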